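(* Let $\mathrm{UB}(m,k):=m(m-1)+mk$. There exists a parameter-free robust algorithm for the Discriminative Feature Feedback protocol described in the context (i.e., one that receives no input parameters) such that, for every $m,k$ and every input stream that is consistent with some representation of size $m$ with at most $k$ exceptions, the algorithm makes at most \[32\,\mathrm{UB}(m,k)\log^2\big(8\,\mathrm{UB}(m,k)\big) = \tilde{O}(m^2+mk)\] mistakes.
   Context: Setting. Let $\mathcal{X}$ be a domain of examples, $\mathcal{Y}$ a finite set of labels, and $\Phi$ a (possibly infinite, not necessarily known to the learner) set of binary features $\phi:\mathcal{X}\to\{\texttt{true},\texttt{false}\}$, closed under negation. A representation of size $m$ is a family $\mathcal{G}=\{G_1,\dots,G_m\}$ of subsets (components) of $\mathcal{X}$ with $\mathcal{X}=\bigcup_i G_i$; each component $G$ has a label $\ell(G)\in\mathcal{Y}$; for each $x$ a fixed component $G(x)\ni x$ is chosen, and the target concept is $c^*(x)=\ell(G(x))$. For any two components $G_i,G_j$ with $\ell(G_i)\neq\ell(G_j)$ there is a discriminative feature $\phi(G_i,G_j)\in\Phi$ true on every $x\in G_i$ and false on every $x\in G_j$, with $\phi(G_j,G_i)=\neg\phi(G_i,G_j)$. Protocol. The learner first receives an example $x_0$ with its label $y_0$. Then in each round: an example $x_t$ arrives; the learner predicts a label $\hat y_t$ together with an explanation $\hat x_t$, an example previously observed with label $\hat y_t$; if the prediction is correct no feedback is given; if it is incorrect (a mistake), the teacher provides $y_t=c^*(x_t)$ and the feature $\phi(G(x_t),G(\hat x_t))$. An example is an exception if the teacher's feedback on it is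 inconsistent with the representation and the protocol. The stream is consistent with a representation of size $m$ with at most $k$ exceptions if some such representation exists for which all feedback conforms to the protocol except on at most $k$ examples; the stream is otherwise arbitrary. *)

(* Defs.v *)
From mathcomp Require Import all_boot.
From Stdlib Require Import Reals.

Set Implicit Arguments.
Unset Strict Implicit.
Unset Printing Implicit Defensive.

Section DFF.
Variables (X : Type) (Y : finType).

Definition feature := X -> bool.

Definition closed_neg (Phi : feature -> Prop) : Prop :=
  forall f, Phi f -> Phi (fun x => ~~ f x).

(** What the learner sees about a past round t >= 1:
    the example x_t, its (now known) label, and the feature given as
    feedback (Some phi iff the round was a mistake). On a correct round
    the known label is the learner's own prediction; on a mistake it is
    the label supplied by the teacher. *)
Definition history := seq (X * Y * option feature).

(** A (deterministic, parameter-free) learner: given the initial labelled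
    example (x0, y0), the history of past rounds and the current example,
    it outputs a predicted label and the index of the explanation among the
    observed examples (index 0 = x0, index t = example of round t). *)
Definition learner := X -> Y -> history -> X -> Y * nat.

(** A round of the input stream: the example x_t, the teacher's label y_t
    for it, and the teacher's feature response as a function of the
    explanation example chosen by the learner (the stream is arbitrary). *)
Record srnd := SRnd { s_x : X; s_y : Y; s_phi : X -> feature }.

Record entry := Entry {
  e_x : X;
  e_y : Y;
  e_pred : Y;
  e_idx : nat;
  e_expl : X;
  e_fb : option feature
}.

Definition is_mistake (e : entry) : bool := e_pred e != e_y e.

Fixpoint run_aux (A : learner) (x0 : X) (y0 : Y) (h : history)
    (s : seq srnd) : seq entry :=
  match s with
  | [::] => [::]
  | r :: s' =>
      let p := A x0 y0 h (s_x r) in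
      let obs := (x0, y0) :: [seq (z.1.1, z.1.2) | z <- h] in
      let xh := (nth (x0, y0) obs p.2).1 in
      let fb := if p.1 != s_y r then Some (s_phi r xh) else None in
      Entry (s_x r) (s_y r) p.1 p.2 xh fb
        :: run_aux A x0 y0 (rcons h (s_x r, s_y r, fb)) s'
  end.

Definition run (A : learner) (x0 : X) (y0 : Y) (s : seq srnd) : seq entry :=
  run_aux A x0 y0 [::] s.

Definition observed (x0 : X) (y0 : Y) (tr : seq entry) (t : nat) : seq (X * Y) :=
  (x0, y0) :: [seq (e_x e, e_y e) | e <- take t tr].

Definition valid_run (x0 : X) (y0 : Y) (tr : seq entry) : Prop :=
  forall t, t < size tr ->
    let e := nth (Entry x0 y0 y0 0 x0 None) tr t in
    let obs := observed x0 y0 tr t in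
    e_idx e < size obs /\ nth (x0, y0) obs (e_idx e) = (e_expl e, e_pred e).

Definition num_mistakes (tr : seq entry) : nat := count is_mistake tr.

(** A representation of size m over the feature set Phi: components
    comp i (i < m), labels lab i, the fixed component G x containing x, and
    discriminative features phi i j for pairs with distinct labels. *)
Definition is_rep (Phi : feature -> Prop) (m : nat) (comp : 'I_m -> X -> Prop)
    (lab : 'I_m -> Y) (G : X -> 'I_m) (phi : 'I_m -> 'I_m -> feature) : Prop :=
  (forall x, comp (G x) x) /\
  (forall i j, lab i != lab j ->
     [/\ Phi (phi i j),
         (forall x, comp i x -> phi i j x = true),
         (forall x, comp j x -> phi i j x = false) &
         (forall x, phi j i x = ~~ phi i j x)]).

(** The feedback on transcript entry e conforms to the representation and
    the protocol: the teacher's label is c*(x_t) = lab (G x_t), and on a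
    mistake the feature given is phi(G(x_t), G(xhat_t)) (which requires the
    two components to have distinct labels). *)
Definition conforms (m : nat) (lab : 'I_m -> Y) (G : X -> 'I_m)
    (phi : 'I_m -> 'I_m -> feature) (e : entry) : Prop :=
  e_y e = lab (G (e_x e)) /\
  (is_mistake e ->
     lab (G (e_x e)) <> lab (G (e_expl e)) /\
     exists f, e_fb e = Some f /\
       forall z, f z = phi (G (e_x e)) (G (e_expl e)) z).

(** Positions: 0 is the initial example
    (x0,y0), position t+1 is the t-th entry of tr. *)
Definition consistent (Phi : feature -> Prop) (m k : nat) (x0 : X) (y0 : Y)
    (tr : seq entry) : Prop :=
  exists comp lab G phi, @is_rep Phi m comp lab G phi /\
  exists E : seq nat, size E <= k /\
    (0 \notin E -> y0 = lab (G x0)) /\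
    (forall t, t < size tr -> t.+1 \notin E ->
       conforms lab G phi (nth (Entry x0 y0 y0 0 x0 None) tr t)).

End DFF.

Definition UB (m k : nat) : nat := m * (m - 1) + m * k.

(** log base 2 (Stdlib's ln is 0 on nonpositive arguments). *)
Definition log2 (x : R) : R := (ln x / ln 2)%R.

Definition mistake_bound (m k : nat) : R :=
  (32 * INR (UB m k) * (log2 (8 * INR (UB m k))) ^ 2)%R.

(* Main.v *)
Require Import Defs.
From mathcomp Require Import all_boot.
From Stdlib Require Import Reals Lra.
From Stdlib Require Import ClassicalDescription.
From mathcomp Require Import zify.

Set Implicit Arguments.
Unset Strict Implicit.
Unset Printing Implicit Defensive.

Definition pb (P : Prop) : bool :=
  if excluded_middle_informative P then true else false.
Lemma pbP (P : Prop) : reflect P (pb P).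
Proof. rewrite /pb; case: excluded_middle_informative => H; constructor => //. Qed.

Record rep (X : Type) (Y : finType) :=
  Rep { r_x : X; r_y : Y; r_i : nat; r_F : seq (feature X) }.
Arguments Rep {X Y}.

Definition matches {X : Type} {Y : finType} (r : rep X Y) (x : X) : bool :=
  all (fun g => g x) (r_F r).

Definition pos {X : Type} {Y : finType} (st : seq (rep X Y)) (x : X) : nat :=
  let p := find (fun r => matches r x) st in if p < size st then p else 0.

Fixpoint upd_at {T : Type} (p : nat) (f : T -> T) (s : seq T) : seq T :=
  match s, p with
  | [::], _ => [::]
  | r :: s', 0 => f r :: s'
  | r :: s', p'.+1 => r :: upd_at p' f s'
  end.

Definition addf {X : Type} {Y : finType} (r : rep X Y) (g : feature X) :=
  Rep (r_x r) (r_y r) (r_i r) (g :: r_F r).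

Definition step {X : Type} {Y : finType} (st : seq (rep X Y)) (n : nat)
  (e : X * Y * option (feature X)) : seq (rep X Y) :=
  match e.2 with
  | None => st
  | Some f =>
    let x := e.1.1 in let y := e.1.2 in
    let st1 := upd_at (pos st x) (fun r => addf r (fun z => ~~ f z)) st in
    if has (fun r => (r_y r == y) && matches r x) st1 then st1
    else rcons st1 (Rep x y n [::])
  end.

Definition d0 {X : Type} {Y : finType} (x0 : X) (y0 : Y) : rep X Y := Rep x0 y0 0 [::].

Definition stepA {X : Type} {Y : finType} (acc : seq (rep X Y) * nat)
  (e : X * Y * option (feature X)) := (step acc.1 acc.2 e, acc.2.+1).

Definition stateA {X : Type} {Y : finType} (x0 : X) (y0 : Y) (h : history X Y) :=
  foldl stepA ([:: d0 x0 y0], 1) h.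

Definition alg {X : Type} {Y : finType} : learner X Y := fun x0 y0 h x =>
  let st := (stateA x0 y0 h).1 in
  let r := nth (d0 x0 y0) st (pos st x) in (r_y r, r_i r).

Lemma stateA_snd {X : Type} {Y : finType} (x0 : X) (y0 : Y) h :
  (stateA x0 y0 h).2 = (size h).+1.
Proof.
elim/last_ind: h => // h e IH.
by rewrite /stateA foldl_rcons /= -/(stateA x0 y0 h) IH size_rcons.
Qed.

Lemma stateA_rcons {X : Type} {Y : finType} (x0 : X) (y0 : Y) h e :
  (stateA x0 y0 (rcons h e)).1 = step (stateA x0 y0 h).1 (size h).+1 e.
Proof. by rewrite /stateA foldl_rcons /= -/(stateA x0 y0 h) stateA_snd. Qed.

Definition obsh {X : Type} {Y : finType} (x0 : X) (y0 : Y) (h : history X Y) :=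
  (x0, y0) :: [seq (z.1.1, z.1.2) | z <- h].

Definition goodrep {X : Type} {Y : finType} (x0 : X) (y0 : Y) (h : history X Y)
  (r : rep X Y) :=
  r_i r < (size h).+1 /\ nth (x0, y0) (obsh x0 y0 h) (r_i r) = (r_x r, r_y r).

Definition Inv {X : Type} {Y : finType} (x0 : X) (y0 : Y) (h : history X Y) :=
  forall r, List.In r (stateA x0 y0 h).1 -> goodrep x0 y0 h r.

Lemma In_upd_at {T : Type} (P : T -> Prop) p f (s : seq T) :
  (forall r, List.In r s -> P r) -> (forall r, P r -> P (f r)) ->
  forall r, List.In r (upd_at p f s) -> P r.
Proof.
elim: s p => [|a s IH] [|p] //= Hs Hf r.
- case=> [<-|H]; [apply: Hf; apply: Hs; by left | apply: Hs; by right].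
- case=> [<-|H]; first by apply: Hs; left.
  by apply: (IH p) => // r' Hr'; apply: Hs; right.
Qed.

Lemma In_rcons {T : Type} (s : seq T) a r : List.In r (rcons s a) -> List.In r s \/ r = a.
Proof.
elim: s => [|b s IH] /=; first by case=> [->|[]]; right.
case=> [->|H]; first by left; left.
by case: (IH H) => [H'|->]; [left; right|right].
Qed.

Lemma nth_In_or {T : Type} (d : T) s p : nth d s p = d \/ List.In (nth d s p) s.
Proof.
elim: s p => [|a s IH] [|p] /=; try by left.
- by right; left.
- by case: (IH p) => H; [left|right; right].
Qed.

Lemma obsh_rcons {X : Type} {Y : finType} (x0 : X) (y0 : Y) h e :
  obsh x0 y0 (rcons h e) = rcons (obsh x0 y0 h) (e.1.1, e.1.2).
Proof. by rewrite /obsh map_rcons rcons_cons. Qed.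

Lemma goodrep_rcons {X : Type} {Y : finType} (x0 : X) (y0 : Y) h e r :
  goodrep x0 y0 h r -> goodrep x0 y0 (rcons h e) r.
Proof.
case=> H1 H2; split; first by rewrite size_rcons ltnS ltnW.
by rewrite obsh_rcons nth_rcons /obsh /= size_map ltnS -ltnS H1 -H2.
Qed.

Lemma Inv_nil {X : Type} {Y : finType} (x0 : X) (y0 : Y) : Inv x0 y0 [::].
Proof. by move=> r [<-|[]]; split. Qed.

Lemma Inv_rcons {X : Type} {Y : finType} (x0 : X) (y0 : Y) h e :
  Inv x0 y0 h -> Inv x0 y0 (rcons h e).
Proof.
move=> HI r; rewrite stateA_rcons /step.
have H1 : forall r, List.In r
   (upd_at (pos (stateA x0 y0 h).1 e.1.1)
      (fun r0 : rep X Y => addf r0 (fun z : X => ~~ (odflt (fun _ => false) e.2) z))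
      (stateA x0 y0 h).1) -> goodrep x0 y0 (rcons h e) r.
  apply: In_upd_at => [r' Hr'|r' []]; first by apply: goodrep_rcons; apply: HI.
  by [].
case: e H1 => [[x y] [f|]] /= H1.
- case: ifP => _; first exact: H1.
  move=> Hr; case: (In_rcons Hr) => [H|->]; first exact: H1.
  split => /=; first by rewrite size_rcons.
  by rewrite map_rcons nth_rcons size_map eqxx ltnn.
- move=> Hr; apply: goodrep_rcons; exact: HI.
Qed.

Lemma alg_good {X : Type} {Y : finType} (x0 : X) (y0 : Y) h x :
  Inv x0 y0 h ->
  let z := nth (d0 x0 y0) (stateA x0 y0 h).1 (pos (stateA x0 y0 h).1 x) in
  goodrep x0 y0 h z.
Proof.
move=> HI /=.
case: (nth_In_or (d0 x0 y0) (stateA x0 y0 h).1 (pos (stateA x0 y0 h).1 x)) => [->|].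
  by split.
exact: HI.
Qed.

Lemma valid_gen {X : Type} {Y : finType} (x0 : X) (y0 : Y) s h :
  Inv x0 y0 h -> forall t, t < size (run_aux alg x0 y0 h s) ->
  let e := nth (Entry x0 y0 y0 0 x0 None) (run_aux alg x0 y0 h s) t in
  e_idx e < (size h + t).+1 /\
  nth (x0, y0) (obsh x0 y0 h ++ [seq (e_x e, e_y e) | e <- take t (run_aux alg x0 y0 h s)])
    (e_idx e) = (e_expl e, e_pred e).
Proof.
elim: s h => [|r s IH] h HI [|t] //=.
- move=> _; rewrite cats0 addn0.
  have [H1 H2] := alg_good (s_x r) HI.
  rewrite /alg /=; split => //.
  by rewrite -/(obsh x0 y0 h) H2.
- rewrite ltnS => Ht.
  move: Ht; set h' := rcons h _ => Ht.
  have /= := IH h' (@Inv_rcons _ _ x0 y0 h _ HI) t Ht.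
  rewrite /h' size_rcons addSnnS => -[H1 H2]; split => //.
  by move: H2; rewrite /obsh map_rcons -cats1 -catA /=.
Qed.

Lemma valid_all {X : Type} {Y : finType} (x0 : X) (y0 : Y) s :
  valid_run x0 y0 (run alg x0 y0 s).
Proof.
move=> t Ht /=.
have [H1 H2] := valid_gen (@Inv_nil _ _ x0 y0) Ht.
split; last by exact: H2.
by rewrite /= size_map size_take Ht.
Qed.

Lemma size_upd_at {T : Type} p (f : T -> T) s : size (upd_at p f s) = size s.
Proof. by elim: s p => [|a s IH] [|p] //=; rewrite IH. Qed.

Lemma sum_upd_at {T : Type} (w : T -> nat) p f (s : seq T) d :
  p < size s ->
  sumn (map w (upd_at p f s)) + w (nth d s p) = sumn (map w s) + w (f (nth d s p)).
Proof.
elim: s p => [|a s IH] [|p] //=; first by move=> _; lia.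
by rewrite ltnS => /IH; lia.
Qed.

Lemma sum_upd_mono {T : Type} (w : T -> nat) p f (s : seq T) :
  (forall r, w r <= w (f r)) -> sumn (map w s) <= sumn (map w (upd_at p f s)).
Proof.
move=> Hw; elim: s p => [|a s IH] [|p] //=.
- by rewrite leq_add2r.
- by rewrite leq_add2l.
Qed.

Lemma has_upd_at {T : Type} (P : pred T) p f (s : seq T) d :
  (P (nth d s p) -> P (f (nth d s p))) -> has P s -> has P (upd_at p f s).
Proof.
elim: s p => [|a s IH] [|p] //= H.
- by case/orP => [/H -> //|->]; rewrite orbT.
- by case/orP => [->//|/(IH p H) ->]; rewrite orbT.
Qed.

Lemma has_upd_at_back {T : Type} (P : pred T) p f (s : seq T) :
  (forall r, P (f r) -> P r) -> has P (upd_at p f s) -> has P s.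
Proof.
move=> H; elim: s p => [|a s IH] [|p] //=.
- by case/orP => [/H -> //|->]; rewrite orbT.
- by case/orP => [->//|/IH ->]; rewrite orbT.
Qed.


Section Pot.
End Pot.

Definition holds_on {X : Type} {m : nat} (G : X -> 'I_m) (b : 'I_m) (g : feature X) :=
  pb (forall x', G x' = b -> g x' = true).
Definition fals_on {X : Type} {m : nat} (G : X -> 'I_m) (b : 'I_m) (g : feature X) :=
  pb (forall x', G x' = b -> g x' = false).
Definition clean {X : Type} {Y : finType} {m : nat} (lab : 'I_m -> Y) (G : X -> 'I_m)
  (b : 'I_m) (r : rep X Y) :=
  [&& G (r_x r) == b, r_y r == lab b & all (holds_on G b) (r_F r)].
Definition excl {X : Type} {Y : finType} {m : nat} (G : X -> 'I_m) (b : 'I_m) (r : rep X Y) :=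
  has (fals_on G b) (r_F r).
Definition Wt {X : Type} {Y : finType} {m : nat} (G : X -> 'I_m) (r : rep X Y) :=
  #|[set b | excl G b r]|.
Definition Npot {X : Type} {Y : finType} {m : nat} (G : X -> 'I_m) (st : seq (rep X Y)) :=
  sumn (map (Wt G) st).
Definition Cpot {X : Type} {Y : finType} {m : nat} (lab : 'I_m -> Y) (G : X -> 'I_m)
  (st : seq (rep X Y)) := #|[set b | has (clean lab G b) st]|.

Lemma Wt_addf {X : Type} {Y : finType} {m : nat} (G : X -> 'I_m) (r : rep X Y) g :
  Wt G r <= Wt G (addf r g).
Proof.
apply: subset_leq_card; apply/subsetP => b; rewrite !inE /excl /= => ->.
by rewrite orbT.
Qed.

Lemma Npot_rcons {X : Type} {Y : finType} {m : nat} (G : X -> 'I_m) st (r : rep X Y) :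
  Npot G (rcons st r) = Npot G st + Wt G r.
Proof. by rewrite /Npot map_rcons sumn_rcons. Qed.

Lemma Cpot_rcons {X : Type} {Y : finType} {m : nat} (lab : 'I_m -> Y) (G : X -> 'I_m) st
  (r : rep X Y) : Cpot lab G st <= Cpot lab G (rcons st r).
Proof.
apply: subset_leq_card; apply/subsetP => b; rewrite !inE has_rcons => ->.
by rewrite orbT.
Qed.

Lemma Npot_le {X : Type} {Y : finType} {m : nat} (G : X -> 'I_m) (st : seq (rep X Y)) :
  Npot G st <= m * size st.
Proof.
elim: st => [|r st IH] /=; first by rewrite muln0.
rewrite /Npot /= -/(Npot G st) mulnS leq_add //.
by rewrite /Wt; apply: leq_trans (max_card _) _; rewrite card_ord.
Qed.

Lemma Cpot_le {X : Type} {Y : finType} {m : nat} (lab : 'I_m -> Y) (G : X -> 'I_m)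
  (st : seq (rep X Y)) : Cpot lab G st <= m.
Proof. by rewrite /Cpot; apply: leq_trans (max_card _) _; rewrite card_ord. Qed.

Lemma round {X : Type} {Y : finType} (m : nat) (comp : 'I_m -> X -> Prop)
  (lab : 'I_m -> Y) (G : X -> 'I_m) (phi : 'I_m -> 'I_m -> feature X)
  (Hcomp : forall x, comp (G x) x)
  (Hphi : forall i j, lab i != lab j ->
     (forall x, comp i x -> phi i j x = true) /\ (forall x, comp j x -> phi i j x = false))
  (st : seq (rep X Y)) d n x y f0 (e : bool) :
  (~~ e -> y = lab (G x) /\
     (r_y (nth d st (pos st x)) != y ->
        lab (G x) <> lab (G (r_x (nth d st (pos st x)))) /\
        forall w, f0 w = phi (G x) (G (r_x (nth d st (pos st x)))) w)) ->
  let st' := step st n (x, y, if r_y (nth d st (pos st x)) != y then Some f0 else None) in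
  (r_y (nth d st (pos st x)) != y) + Npot G st + size st <= e + Npot G st' + size st' /\
  size st' + Cpot lab G st <= Cpot lab G st' + 2 * e + size st.
Proof.
move=> Hc st'; rewrite /st'.
move: Hc; set p := pos st x; set z := nth d st p => Hc.
case: ifP => Hmis; last by rewrite /step /=; lia.
rewrite /step /= -/p.
set g := fun w => ~~ f0 w.
set st1 := upd_at p (addf^~ g) st.
have HN1 : Npot G st <= Npot G st1.
  by apply: sum_upd_mono => r; apply: Wt_addf.
have HL1 : size st1 = size st by rewrite size_upd_at.
case: e Hc => Hc.
- have HC1 : Cpot lab G st <= Cpot lab G st1 + 1.
    rewrite /Cpot.
    apply: leq_trans (_ : #|[set b | has (clean lab G b) st1] :|: [set G (r_x z)]| <= _).
      apply: subset_leq_card; apply/subsetP => b; rewrite !inE => Hb.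
      case: (eqVneq b (G (r_x z))) => [->|Hne]; first by rewrite orbT.
      apply/orP; left; apply: (has_upd_at (d := d)) Hb => /and3P[/eqP Hg _ _].
      by move: Hne; rewrite /z Hg eqxx.
    by apply: leq_trans (leq_card_setU _ _) _; rewrite cards1.
  case: ifP => _; first by lia.
  rewrite Npot_rcons size_rcons; have := Cpot_rcons lab G st1 (Rep x y n [::]); lia.
- have [Hy Hm] := Hc isT; have [Hlab Hf] := Hm Hmis.
  have Hlab' : lab (G x) != lab (G (r_x z)) by apply/eqP.
  have [Hphi1 Hphi2] := Hphi _ _ Hlab'.
  have HC1 : Cpot lab G st <= Cpot lab G st1.
    apply: subset_leq_card; apply/subsetP => b; rewrite !inE => Hb.
    apply: (has_upd_at (d := d)) Hb => /and3P[/eqP Hg Hy' Hall].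
    apply/and3P; split => //; first by rewrite /= Hg.
    rewrite /= Hall andbT; apply/pbP => x' Hx'.
    rewrite /g Hf Hphi2 //.
    by rewrite -/z Hg -Hx'; apply: Hcomp.
  have HNs : has (matches^~ x) st -> Npot G st < Npot G st1.
    move=> Hh.
    have Hp : p < size st by rewrite /p /pos -has_find Hh -has_find.
    have Hpf : p = find (matches^~ x) st by rewrite /p /pos -has_find Hh.
    have Hzm : matches z x by rewrite /z Hpf; exact: (nth_find d Hh).
    have HW : Wt G z < Wt G (addf z g).
      apply: proper_card; apply/properP; split.
        apply/subsetP => b; rewrite !inE /excl /= => ->; by rewrite orbT.
      exists (G x); rewrite !inE /excl /=.
        apply/orP; left; apply/pbP => x' Hx'.
        by rewrite /g Hf Hphi1 // -Hx'; apply: Hcomp.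
      move: Hzm; rewrite /matches -all_predC => Hall.
      apply: sub_all Hall => g' Hg'; apply/negP => /pbP H.
      by rewrite H in Hg'.
    have := sum_upd_at (Wt G) (addf^~ g) d Hp.
    rewrite -/st1 -/z /Npot; lia.
  have HnoHas : ~~ has (matches^~ x) st ->
      has (fun r => (r_y r == y) && matches r x) st1 = false.
    move=> Hn; apply/negbTE; apply/negP => H.
    have H2 : has (matches^~ x) st1 by apply: sub_has H => r /andP[].
    move: Hn; rewrite (has_upd_at_back _ H2) // => r.
    by rewrite /matches /= => /andP[].
  case: ifP => Happ.
    case Hh: (has (matches^~ x) st); last by rewrite HnoHas ?Hh in Happ.
    have := HNs Hh; lia.
  have HCapp : Cpot lab G st1 < Cpot lab G (rcons st1 (Rep x y n [::])).
    apply: proper_card; apply/properP; split.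
      apply/subsetP => b; rewrite !inE has_rcons => ->; by rewrite orbT.
    exists (G x); rewrite !inE ?has_rcons.
      by apply/orP; left; rewrite /clean /= eqxx Hy eqxx.
    apply/negP => H; suff: has (fun r => (r_y r == y) && matches r x) st1 by rewrite Happ.
    apply: sub_has H => r.
    case/and3P => _ /eqP -> Hall; rewrite -Hy eqxx /=.
    apply: sub_all Hall => g' /pbP H; exact: H.
  rewrite Npot_rcons size_rcons; lia.
Qed.

Definition Kc (E : seq nat) (o n : nat) := count (fun t => t.+1 \in E) (seq.iota o n).

Lemma size_run_aux {X : Type} {Y : finType} (A : learner X Y) x0 y0 h s :
  size (run_aux A x0 y0 h s) = size s.
Proof. by elim: s h => [|r s IH] h //=; rewrite IH. Qed.

Lemma run_aux_cons {X : Type} {Y : finType} (x0 : X) (y0 : Y) h r s :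
  Inv x0 y0 h ->
  let st := (stateA x0 y0 h).1 in
  let z := nth (d0 x0 y0) st (pos st (s_x r)) in
  let fb := if r_y z != s_y r then Some (s_phi r (r_x z)) else None in
  run_aux alg x0 y0 h (r :: s) =
  Entry (s_x r) (s_y r) (r_y z) (r_i z) (r_x z) fb
    :: run_aux alg x0 y0 (rcons h (s_x r, s_y r, fb)) s.
Proof.
move=> HI /=.
have [_ Hx] := alg_good (s_x r) HI.
by rewrite /alg /= -/(obsh x0 y0 h) Hx.
Qed.

Lemma pot_gen {X : Type} {Y : finType} (x0 : X) (y0 : Y) (m : nat)
  (comp : 'I_m -> X -> Prop)
  (lab : 'I_m -> Y) (G : X -> 'I_m) (phi : 'I_m -> 'I_m -> feature X)
  (Hcomp : forall x, comp (G x) x)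
  (Hphi : forall i j, lab i != lab j ->
     (forall x, comp i x -> phi i j x = true) /\ (forall x, comp j x -> phi i j x = false))
  (E : seq nat) :
  forall s h, Inv x0 y0 h ->
  (forall t, t < size s -> (size h + t).+1 \notin E ->
     conforms lab G phi (nth (Entry x0 y0 y0 0 x0 None) (run_aux alg x0 y0 h s) t)) ->
  exists stf : seq (rep X Y),
    num_mistakes (run_aux alg x0 y0 h s) + Npot G (stateA x0 y0 h).1 + size (stateA x0 y0 h).1
      <= Kc E (size h) (size s) + Npot G stf + size stf /\
    size stf + Cpot lab G (stateA x0 y0 h).1
      <= Cpot lab G stf + 2 * Kc E (size h) (size s) + size (stateA x0 y0 h).1.
Proof.
elim=> [|r s IH] h HI Hcf.
  exists (stateA x0 y0 h).1; rewrite /Kc /=; lia.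
move: Hcf; rewrite (run_aux_cons _ _ HI) /=.
set st := (stateA x0 y0 h).1.
set z := nth (d0 x0 y0) st (pos st (s_x r)).
set fb := if r_y z != s_y r then Some (s_phi r (r_x z)) else None.
move=> Hcf.
have Hc : ~~ ((size h).+1 \in E) -> s_y r = lab (G (s_x r)) /\
     (r_y z != s_y r ->
        lab (G (s_x r)) <> lab (G (r_x z)) /\
        forall w, s_phi r (r_x z) w = phi (G (s_x r)) (G (r_x z)) w).
  move=> He; have He' : (size h + 0).+1 \notin E by rewrite addn0.
  have [Hy Hm] := Hcf 0 isT He'.
  split => // Hmis; have [Hl [f [Hf1 Hf2]]] := Hm Hmis.
  move: Hf1; rewrite /= /fb Hmis => -[->]; split => //.
have := @round X Y m comp lab G phi Hcomp Hphi st (d0 x0 y0) (size h).+1 (s_x r) (s_y r)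
  (s_phi r (r_x z)) ((size h).+1 \in E) Hc.
rewrite -/z -/fb -/st => -[R1 R2].
have HI' := @Inv_rcons _ _ x0 y0 h (s_x r, s_y r, fb) HI.
have Hcf' : forall t, t < size s -> (size (rcons h (s_x r, s_y r, fb)) + t).+1 \notin E ->
     conforms lab G phi (nth (Entry x0 y0 y0 0 x0 None)
        (run_aux alg x0 y0 (rcons h (s_x r, s_y r, fb)) s) t).
  by move=> t Ht He; apply: (Hcf t.+1 Ht); rewrite size_rcons addSnnS in He.
have [stf [H1 H2]] := IH _ HI' Hcf'.
exists stf.
move: H1 H2; rewrite stateA_rcons size_rcons -/st.
have -> : Kc E (size h) (size s).+1 = ((size h).+1 \in E) + Kc E (size h).+1 (size s) by [].
rewrite /num_mistakes /= -/(num_mistakes _) /is_mistake /=.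
move=> H1 H2.
set A1 := Npot G (step st (size h).+1 (s_x r, s_y r, fb)) in R1 H1.
set A2 := size (step st (size h).+1 (s_x r, s_y r, fb)) in R1 R2 H1 H2.
set A3 := Cpot lab G (step st (size h).+1 (s_x r, s_y r, fb)) in R2 H2.
move: R1 R2 H1 H2; case: (r_y z != s_y r); case: ((size h).+1 \in E) => /= R1 R2 H1 H2; lia.
Qed.

Lemma log2_ge3 (u : R) : (1 <= u)%R -> (3 <= log2 (8 * u))%R.
Proof.
move=> Hu.
have Hl2 : (0 < ln 2)%R by have := ln_lt_2; lra.
have H8 : ln 8 = (3 * ln 2)%R.
  replace 8%R with (2 ^ 3)%R by ring.
  by rewrite ln_pow; [rewrite INR_IZR_INZ /= | lra].
have Hle : (ln 8 <= ln (8 * u))%R.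
  case: (Rle_lt_or_eq_dec 1 u Hu) => H.
    apply: Rlt_le; apply: ln_increasing; lra.
  rewrite -H; replace (8 * 1)%R with 8%R by ring; lra.
rewrite /log2.
have -> : (3 = 3 * ln 2 * / ln 2)%R by field; lra.
apply: Rmult_le_compat_r; last lra.
by apply: Rlt_le; apply: Rinv_0_lt_compat.
Qed.

Lemma bound_ge (m k : nat) : (1 <= UB m k)%N ->
  (288 * INR (UB m k) <= mistake_bound m k)%R.
Proof.
move=> HU; rewrite /mistake_bound.
have Hu : (1 <= INR (UB m k))%R by exact: (le_INR _ _ (elimT leP HU)).
have HL := log2_ge3 Hu.
move: HL Hu; generalize (log2 (8 * INR (UB m k))) => L; generalize (INR (UB m k)) => u HL Hu.
have HL2 : (9 <= L ^ 2)%R.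
  have -> : (L ^ 2 = L * L)%R by simpl; ring.
  have -> : (9 = 3 * 3)%R by ring.
  apply: Rmult_le_compat; lra.
have H0 : (0 <= u * (L ^ 2 - 9))%R by apply: Rmult_le_pos; lra.
lra.
Qed.

Lemma bound_ge0 (m k : nat) : (0 <= mistake_bound m k)%R.
Proof.
rewrite /mistake_bound.
have := pos_INR (UB m k).
generalize (log2 (8 * INR (UB m k))) => L; generalize (INR (UB m k)) => u Hu.
have := pow2_ge_0 L => H.
have : (0 <= u * L ^ 2)%R by apply: Rmult_le_pos.
lra.
Qed.

Lemma Kc_le (E : seq nat) o n : Kc E o n <= size E.
Proof.
rewrite /Kc -size_filter.
set F := filter _ _.
have U : uniq (map succn F).
  rewrite map_inj_uniq; last exact: succn_inj.
  by rewrite filter_uniq // iota_uniq.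
rewrite -(size_map succn); apply: uniq_leq_size U _.
move=> t /mapP [t' Ht' ->]; by move: Ht'; rewrite mem_filter => /andP[].
Qed.

Lemma count_le_iota {T : Type} (a : pred T) (b : pred nat) (d : T) (s : seq T) o :
  (forall t, t < size s -> a (nth d s t) -> b (o + t)) ->
  count a s <= count b (seq.iota o (size s)).
Proof.
elim: s o => [|x s IH] o H //=.
have H0 := H 0 isT; rewrite addn0 /= in H0.
have IH' : count a s <= count b (seq.iota o.+1 (size s)).
  by apply: IH => t Ht Ha; rewrite addSnnS; apply: (H t.+1).
apply: leq_add => //.
by case: (a x) H0 => // ->.
Qed.

Lemma ord_le1 (m : nat) : m <= 1 -> forall i j : 'I_m, i = j.
Proof.
move=> Hm i j; apply: ord_inj.
by move: (ltn_ord i) (ltn_ord j); lia.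
Qed.

Theorem theorem2 (X : Type) (Y : finType) :
  exists A : learner X Y,
    (forall (x0 : X) (y0 : Y) (s : seq (srnd X Y)),
        valid_run x0 y0 (run A x0 y0 s)) /\
    (forall (Phi : feature X -> Prop), closed_neg Phi ->
     forall (m k : nat) (x0 : X) (y0 : Y) (s : seq (srnd X Y)),
       consistent Phi m k x0 y0 (run A x0 y0 s) ->
       (INR (num_mistakes (run A x0 y0 s)) <= mistake_bound m k)%R).
Proof.
exists alg; split; first by move=> x0 y0 s; exact: valid_all.
move=> Phi _ m k x0 y0 s [comp [lab [G [phi [[Hcomp Hphi0] [E [HE [_ Hcf]]]]]]]].
have Hphi : forall i j, lab i != lab j ->
    (forall x, comp i x -> phi i j x = true) /\ (forall x, comp j x -> phi i j x = false).
  by move=> i j /Hphi0 [_ H1 H2 _].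
have Hsz : size (run alg x0 y0 s) = size s by rewrite size_run_aux.
have HK : Kc E 0 (size s) <= k := leq_trans (Kc_le E 0 (size s)) HE.
have Hm0 : 0 < m by apply: leq_ltn_trans (leq0n _) (ltn_ord (G x0)).
set M := num_mistakes (run alg x0 y0 s).
have Hcf' : forall t, t < size s -> (size ([::] : history X Y) + t).+1 \notin E ->
    conforms lab G phi (nth (Entry x0 y0 y0 0 x0 None) (run_aux alg x0 y0 [::] s) t).
  by move=> t Ht He; apply: Hcf; rewrite ?Hsz.
have [stf [H1 H2]] := @pot_gen X Y x0 y0 m comp lab G phi Hcomp Hphi E s [::] (@Inv_nil _ _ x0 y0) Hcf'.
have HN := Npot_le G stf.
have HC := Cpot_le lab G stf.
move: H1 H2; rewrite /= -/(run alg x0 y0 s) -/M => H1 H2.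
have HLf : size stf <= m + 2 * Kc E 0 (size s) + 1 by lia.
have Hmul : m * size stf <= m * (m + 2 * Kc E 0 (size s) + 1) by rewrite leq_mul2l HLf orbT.
have Hbig : M <= Kc E 0 (size s) + (m * (m + 2 * Kc E 0 (size s) + 1) + (m + 2 * Kc E 0 (size s) + 1)) by lia.
have Hsmall : m <= 1 -> M <= Kc E 0 (size s).
  move=> Hm1; rewrite /M /num_mistakes -Hsz.
  apply: (count_le_iota (d := Entry x0 y0 y0 0 x0 None)) => t Ht Hmis.
  apply/negPn/negP => He; have [_ Hc] := Hcf t Ht He; have [Hl _] := Hc Hmis.
  by apply: Hl; congr lab; apply: ord_le1 Hm1 _ _.
have key : M = 0 \/ (1 <= UB m k /\ M <= 288 * UB m k).
  case: (leqP m 1) => Hm.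
    have Hm1 : m = 1 by lia.
    have HMk : M <= k by apply: leq_trans (Hsmall Hm) HK.
    rewrite /UB Hm1.
    case: k HMk {HK HE} => [|k] HMk; first by left; lia.
    by right; lia.
  have Hmm : m * (m - 1) + m = m * m.
    have -> : m * m = m * (m - 1 + 1) by rewrite subnK // ltnW.
    by rewrite mulnDr muln1.
  have Hm2 : m <= m * (m - 1) by apply: leq_pmulr; lia.
  have Hkm : k <= m * k by apply: leq_pmull.
  have Hexp : m * (m + 2 * k + 1) = m * m + 2 * (m * k) + m.
    by rewrite !mulnDr muln1 muln0 addn0 mul2n -addnn.
  have Hexp' : m * (m + 2 * Kc E 0 (size s) + 1) <= m * (m + 2 * k + 1).
    by apply: leq_mul => //; lia.
  right; rewrite /UB; split; first by lia.
  lia.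
case: key => [->|[HU HM]]; first exact: bound_ge0.
apply: Rle_trans (bound_ge HU).
have := le_INR _ _ (elimT leP HM).
by rewrite mult_INR (INR_IZR_INZ 288).
Qed.
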